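(* Fix a finite relational vocabulary $\sigma$ and integers $n,d\ge 0$. In the generalized core model structure on $\mathbf{STRUCT}[\sigma_n]_{(d,0)}^{\widetilde{\mathcal{T}(\sigma_n)}}$, any two morphisms $f,g:X\to Y$ with the same domain and the same codomain are homotopic.
   Context: Let $\sigma=\langle R_1,\dots,R_l\rangle$ be a finite relational vocabulary, $R_i$ of arity $p_i$, and $\sigma_n$ its expansion by $n$ constant symbols; all structures are finite. For a $\sigma$-structure $\mathfrak{A}$, its Gaifman graph has vertex set $A$ and an edge between $a,b$ iff both occur in a tuple of some $R_i^{\mathfrak{A}}$; $d(\cdot,\cdot)$ is shortest-path distance, $d(\vec a,b)=\min_i d(a_i,b)$, $B_d^{\mathfrak{A}}(\vec a)=\{b: d(\vec a,b)\le d\}$, and the $d$-neighborhood $N_d^{\mathfrak{A}}(\vec a)$ is the $\sigma_n$-structure on $B_d^{\mathfrak{A}}(\vec a)$ with relations $R_i^{\mathfrak{A}}\cap B_d^{\mathfrak{A}}(\vec a)^{p_i}$ and constants $a_1,\dots,a_n$. Homomorphisms of $d$-neighborhoods are relation-preserving maps of balls sending $a_i\mapsto b_i$. $\widetilde{\mathcal{T}(\sigma_n)}$ is the $\sigma_n$-structure whose universe is the set of closed $\sigma_n$-terms (the constant symbols), constants interpreted as themselves and all relations empty. The category $\mathbf{STRUCT}[\sigma_n]_{(d,0)}^{\widetilde{\mathcal{T}(\sigma_n)}}$ has objects the $d$-neighborhoods $N_d^{\mathfrak{A}}(\vec a)$, the $0$-neighborhoods $N_0^{\mathfrak{A}}(a)$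 and $\widetilde{\mathcal{T}(\sigma_n)}$; morphisms are homomorphisms of $d$-neighborhoods, the unique homomorphism $\widetilde{\mathcal{T}(\sigma_n)}\to N_d^{\mathfrak{A}}(\vec a)$, and the unique homomorphism $N_d^{\mathfrak{A}}(\vec a)\to N_0^{\mathfrak{A}}(a)$. Two objects are homomorphically equivalent if there are morphisms in both directions. The generalized core model structure (of Droz and Zakharevich) is the model structure in which a morphism $f:X\to Y$ is a weak equivalence iff $X$ and $Y$ are homomorphically equivalent, and the acyclic fibrations are exactly the retractions (morphisms $r$ with $r\circ s=\mathrm{id}$ for some $s$); cofibrations are the morphisms with the left lifting property w.r.t. retractions and fibrations those with the right lifting property w.r.t. acyclic cofibrations. ''Homotopic'' refers to left (equivalently right) homotopy in this model structure. *)

(* Defs.v *)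
From mathcomp Require Import all_boot.
Set Implicit Arguments.
Unset Strict Implicit.
Unset Printing Implicit Defensive.

Record vocab := Vocab { nrel : nat; arity : 'I_nrel -> nat }.

Record structure (sg : vocab) := Struct {
  carrier :> finType;
  rel : forall i : 'I_(nrel sg), pred ((arity i).-tuple carrier) }.
Arguments rel {sg} s i _.

(* A finite sigma_n-structure (sigma expanded by n constant symbols). *)
Record sstruct (sg : vocab) (n : nat) := SStruct {
  scar :> finType;
  srel : forall i : 'I_(nrel sg), pred ((arity i).-tuple scar);
  scst : n.-tuple scar }.
Arguments srel {sg n} s i _.
Arguments scst {sg n} s.

Definition is_hom (sg : vocab) (n : nat) (X Y : sstruct sg n) (f : X -> Y) : Prop :=
  (forall j : 'I_n, f (tnth (scst X) j) = tnth (scst Y) j) /\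
  (forall (i : 'I_(nrel sg)) (t : (arity i).-tuple X),
      srel X i t -> srel Y i (map_tuple f t)).

Section Gaifman.
Variables (sg : vocab) (A : structure sg).

Definition gadj (a b : A) : bool :=
  [exists i : 'I_(nrel sg), exists t : (arity i).-tuple A,
      [&& rel A i t, a \in t & b \in t]].

(* inball k c x  <=>  d(c, x) <= k  (distance in the Gaifman graph). *)
Fixpoint inball (k : nat) (c : seq A) (x : A) : bool :=
  match k with
  | 0 => x \in c
  | k'.+1 => inball k' c x || [exists y, inball k' c y && gadj y x]
  end.

Lemma inball_mem k (c : seq A) x : x \in c -> inball k c x.
Proof. by elim: k => [|k IH] //= H; rewrite IH. Qed.
End Gaifman.

Section Objects.
Variables (sg : vocab) (n d : nat).

Definition ballT (A : structure sg) (a : n.-tuple A) : finType :=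
  {x : A | inball d a x}.

Definition nbhd (A : structure sg) (a : n.-tuple A) : sstruct sg n :=
  @SStruct sg n (ballT a)
    (fun i t => rel A i (map_tuple val t))
    [tuple (exist _ (tnth a j) (inball_mem d (mem_tnth j a)) : ballT a) | j < n].

Definition pointT (A : structure sg) (x : A) : finType := {y : A | y == x}.

Definition nbhd0 (A : structure sg) (x : A) : sstruct sg n :=
  @SStruct sg n (pointT x)
    (fun i t => rel A i (map_tuple val t))
    [tuple (exist _ x (eqxx x) : pointT x) | j < n].

(* The term structure T(sigma_n)~: universe = the n constant symbols,
   constants interpreted as themselves, all relations empty. *)
Definition termS : sstruct sg n :=
  @SStruct sg n ('I_n : finType) (fun _ _ => false) [tuple j | j < n].

Inductive obj :=
  | Top
  | Nb (A : structure sg) (a : n.-tuple A)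
  | Zr (A : structure sg) (x : A).

Definition und (X : obj) : sstruct sg n :=
  match X with
  | Top => termS
  | Nb A a => nbhd a
  | Zr A x => nbhd0 x
  end.

(* Which kinds of arrows exist: T -> anything (the unique homomorphism),
   homomorphisms N_d -> N_d, the unique homomorphism N_d -> N_0, and
   identities (the only arrows out of / between 0-neighborhoods). *)
Definition allowed (X Y : obj) : Prop :=
  match X, Y with
  | Top, _ => True
  | Nb _ _, Nb _ _ => True
  | Nb _ _, Zr _ _ => True
  | Zr _ _, Zr _ _ => X = Y
  | _, _ => False
  end.

Definition isMor (X Y : obj) (f : und X -> und Y) : Prop :=
  allowed X Y /\ is_hom f.

Definition weq (X Y : obj) (f : und X -> und Y) : Prop :=
  exists g : und Y -> und X, isMor g.

(* retractions = acyclic fibrations *)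
Definition retraction (X Y : obj) (r : und X -> und Y) : Prop :=
  exists s : und Y -> und X, isMor s /\ forall y, r (s y) = y.

Definition cofibration (X Y : obj) (c : und X -> und Y) : Prop :=
  forall (E B : obj) (r : und E -> und B) (u : und X -> und E) (v : und Y -> und B),
    isMor r -> retraction r -> isMor u -> isMor v ->
    (forall x, r (u x) = v (c x)) ->
    exists h : und Y -> und E, isMor h /\
      (forall x, h (c x) = u x) /\ (forall y, r (h y) = v y).

Definition fibration (X Y : obj) (q : und X -> und Y) : Prop :=
  forall (E B : obj) (c : und E -> und B) (u : und E -> und X) (v : und B -> und Y),
    isMor c -> cofibration c -> weq c -> isMor u -> isMor v ->
    (forall e, q (u e) = v (c e)) ->
    exists h : und B -> und X, isMor h /\
      (forall e, h (c e) = u e) /\ (forall b, q (h b) = v b).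

(* The map [i0, i1] : X + X -> C is a cofibration, phrased without coproducts:
   joint left lifting property with respect to retractions. *)
Definition jointly_cofibration (X C : obj) (i0 i1 : und X -> und C) : Prop :=
  forall (E B : obj) (r : und E -> und B) (u0 u1 : und X -> und E) (v : und C -> und B),
    isMor r -> retraction r -> isMor u0 -> isMor u1 -> isMor v ->
    (forall x, r (u0 x) = v (i0 x)) -> (forall x, r (u1 x) = v (i1 x)) ->
    exists h : und C -> und E, isMor h /\
      (forall x, h (i0 x) = u0 x) /\ (forall x, h (i1 x) = u1 x) /\
      (forall c, r (h c) = v c).

(* Left homotopy via a cylinder object X + X -> C -> X
   (cofibration followed by a weak equivalence, composite = fold map). *)
Definition left_homotopic (X Y : obj) (f g : und X -> und Y) : Prop :=
  exists (C : obj) (i0 i1 : und X -> und C) (p : und C -> und X) (H : und C -> und Y),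
    isMor i0 /\ isMor i1 /\ isMor p /\
    (forall x, p (i0 x) = x) /\ (forall x, p (i1 x) = x) /\
    weq p /\ jointly_cofibration i0 i1 /\
    isMor H /\ (forall x, H (i0 x) = f x) /\ (forall x, H (i1 x) = g x).

End Objects.

(* Main.v *)
Require Import Defs.
From mathcomp Require Import all_boot.
Set Implicit Arguments. Unset Strict Implicit. Unset Printing Implicit Defensive.

Lemma is_hom_id sg n (X : sstruct sg n) : is_hom (fun x : X => x).
Proof.
split=> // i t Ht; suff -> : map_tuple (fun x : X => x) t = t by [].
by apply: eq_from_tnth => j; rewrite tnth_map.
Qed.

Lemma isMor_id sg n d (X : obj sg n) : isMor (fun x : und d X => x).
Proof. split; last exact: is_hom_id. by case: X. Qed.

Lemma triv_cyl sg n d (X Y : obj sg n) (f g : und d X -> und d Y) :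
  (forall (E : obj sg n) (u0 u1 : und d X -> und d E), isMor u0 -> isMor u1 ->
     forall x, u0 x = u1 x) ->
  isMor f -> isMor g -> left_homotopic f g.
Proof.
move=> U Hf Hg.
exists X, id, id, id, f.
split; first exact: isMor_id.
split; first exact: isMor_id.
split; first exact: isMor_id.
split=> //; split=> //.
split; first by exists id; exact: isMor_id.
split.
  move=> E B r u0 u1 v Hr _ Hu0 Hu1 Hv H0 H1.
  exists u0; split=> //; split=> //; split; first exact: U.
  by move=> c; rewrite H0.
by split=> //; split=> // x; exact: U.
Qed.

Lemma top_unique sg n d (E : obj sg n) (u0 u1 : und d (Top sg n) -> und d E) :
  isMor u0 -> isMor u1 -> forall x, u0 x = u1 x.
Proof.
move=> [_ [H0 _]] [_ [H1 _]] x.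
have := H0 x; have := H1 x; rewrite /= tnth_mktuple => -> -> //.
Qed.

Lemma point_single sg (A : structure sg) (y : A) (z w : pointT y) : z = w.
Proof. by apply: val_inj; rewrite (eqP (valP z)) (eqP (valP w)). Qed.

Lemma zr_unique sg n d (A : structure sg) (x : A) (E : obj sg n)
  (u0 u1 : und d (Zr n x) -> und d E) :
  isMor u0 -> isMor u1 -> forall z, u0 z = u1 z.
Proof.
case: E u0 u1 => [|B b|B y] u0 u1 [Ha _] // _ z.
exact: point_single.
Qed.

Lemma inball_hom sg (A B : structure sg) (phi : A -> B) :
  (forall i t, Defs.rel A i t -> Defs.rel B i (map_tuple phi t)) ->
  forall k (c : seq A) x, inball k c x -> inball k (map phi c) (phi x).
Proof.
move=> Hphi; elim=> [|k IH] c x /=; first exact: map_f.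
case/orP=> [H|/existsP[y /andP[Hy Hadj]]]; first by rewrite IH.
apply/orP; right; apply/existsP; exists (phi y); rewrite IH //=.
case/existsP: Hadj => i /existsP[t /and3P[Ht Hyt Hxt]].
apply/existsP; exists i; apply/existsP; exists (map_tuple phi t).
by rewrite Hphi //= !map_f.
Qed.

Section Cyl.
Variables (sg : vocab) (n d : nat) (A : structure sg) (a : n.-tuple A).

Definition s1 (x : A) : (A + A)%type := if x \in a then inl x else inr x.
Definition relC i (t : (arity i).-tuple (A + A)%type) : bool :=
  [exists s : (arity i).-tuple A, Defs.rel A i s &&
     ((t == map_tuple inl s) || (t == map_tuple s1 s))].
Definition cylA : structure sg := @Struct sg (A + A)%type relC.
Definition a' : n.-tuple cylA := map_tuple inl a.
Definition fold (z : cylA) : A := match z with inl x => x | inr x => x end.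

Lemma inl_hom i t : Defs.rel A i t -> Defs.rel cylA i (map_tuple inl t).
Proof. by move=> H; apply/existsP; exists t; rewrite H eqxx. Qed.
Lemma s1_hom i t : Defs.rel A i t -> Defs.rel cylA i (map_tuple s1 t).
Proof. by move=> H; apply/existsP; exists t; rewrite H eqxx orbT. Qed.
Lemma fold_s1 x : fold (s1 x) = x.
Proof. by rewrite /s1; case: ifP. Qed.
Lemma fold_hom i t : Defs.rel cylA i t -> Defs.rel A i (map_tuple fold t).
Proof.
case/existsP=> s /andP[Hs /orP[]] /eqP ->.
  have -> : map_tuple fold (map_tuple inl s) = s.
    by apply: eq_from_tnth => j; rewrite !tnth_map.
  by [].
have -> : map_tuple fold (map_tuple s1 s) = s.
  by apply: eq_from_tnth => j; rewrite !tnth_map fold_s1.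
by [].
Qed.

Lemma map_s1a : map s1 a = map inl a.
Proof. by apply/eq_in_map => x Hx; rewrite /s1 Hx. Qed.
Lemma map_folda : map fold (map inl a) = a.
Proof. by rewrite -map_comp map_id. Qed.

Definition X := nbhd d a.
Definition C := nbhd d a'.

Lemma i0_proof (x : ballT d a) : inball d (a' : seq cylA) (inl (val x)).
Proof. exact: (inball_hom inl_hom (valP x)). Qed.
Lemma i1_proof (x : ballT d a) : inball d (a' : seq cylA) (s1 (val x)).
Proof. rewrite /= -map_s1a; exact: (inball_hom s1_hom (valP x)). Qed.
Lemma fold_proof (z : ballT d a') : inball d (a : seq A) (fold (val z)).
Proof. rewrite -map_folda; exact: (inball_hom fold_hom (valP z)). Qed.

Definition i0 (x : X) : C := exist _ (inl (val x)) (i0_proof x).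
Definition i1 (x : X) : C := exist _ (s1 (val x)) (i1_proof x).
Definition foldb (z : C) : X := exist _ (fold (val z)) (fold_proof z).

Definition glue (W : sstruct sg n) (p0 p1 : X -> W) (z : C) : W :=
  match val z with inl _ => p0 (foldb z) | inr _ => p1 (foldb z) end.

Lemma agree (W : sstruct sg n) (p0 p1 : X -> W) :
  is_hom p0 -> is_hom p1 -> forall x : X, val x \in (a : seq A) -> p0 x = p1 x.
Proof.
move=> [H0 _] [H1 _] x /tnthP[k Hk].
have -> : x = tnth (scst X) k by apply: val_inj; rewrite /= tnth_mktuple.
by rewrite H0 H1.
Qed.

Lemma glue_inl (W : sstruct sg n) (p0 p1 : X -> W) z y : val z = inl y -> glue p0 p1 z = p0 (foldb z).
Proof. by rewrite /glue => ->. Qed.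

Lemma glue_s1 (W : sstruct sg n) (p0 p1 : X -> W) z y : is_hom p0 -> is_hom p1 ->
  val z = s1 y -> glue p0 p1 z = p1 (foldb z).
Proof.
move=> h0 h1 Hz; rewrite /glue Hz /s1; case: ifP => Hy //.
by apply: agree => //=; rewrite Hz fold_s1.
Qed.

Lemma foldb_val z : val (foldb z) = fold (val z).
Proof. by []. Qed.

Lemma glue_hom (W : sstruct sg n) (p0 p1 : X -> W) :
  is_hom p0 -> is_hom p1 -> @is_hom sg n C W (glue p0 p1).
Proof.
move=> h0 h1; split.
  move=> j; rewrite (@glue_inl _ _ _ _ (tnth a j)); last first.
    by rewrite /= tnth_mktuple /= tnth_map.
  have -> : foldb (tnth (scst C) j) = tnth (scst X) j.
    by apply: val_inj; rewrite /= !tnth_mktuple /= tnth_map.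
  by case: h0 => ->.
move=> i t /existsP[s /andP[Hs /orP[] /eqP E]].
  have Ej j : val (tnth t j) = inl (tnth s j).
    by have := congr1 (fun u => tnth u j) E; rewrite !tnth_map.
  have -> : map_tuple (glue p0 p1) t = map_tuple p0 (map_tuple foldb t).
    by apply: eq_from_tnth => j; rewrite !tnth_map (glue_inl _ _ (Ej j)).
  case: h0 => _; apply; rewrite /=.
  have -> : map_tuple val (map_tuple foldb t) = s :> (arity i).-tuple A.
    by apply: eq_from_tnth => j; rewrite !tnth_map foldb_val Ej.
  by [].
have Ej j : val (tnth t j) = s1 (tnth s j).
  by have := congr1 (fun u => tnth u j) E; rewrite !tnth_map.
have -> : map_tuple (glue p0 p1) t = map_tuple p1 (map_tuple foldb t).
  by apply: eq_from_tnth => j; rewrite !tnth_map (glue_s1 h0 h1 (Ej j)).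
case: h1 => _; apply; rewrite /=.
have -> : map_tuple val (map_tuple foldb t) = s :> (arity i).-tuple A.
  by apply: eq_from_tnth => j; rewrite !tnth_map foldb_val Ej fold_s1.
by [].
Qed.


Lemma i0_hom : @is_hom sg n X C i0.
Proof.
split.
  by move=> j; apply: val_inj; rewrite /= !tnth_mktuple /= tnth_map.
move=> i t Ht; rewrite /=.
have -> : map_tuple val (map_tuple i0 t) = map_tuple inl (map_tuple val t).
  by apply: eq_from_tnth => j; rewrite !tnth_map.
exact: inl_hom.
Qed.

Lemma i1_hom : @is_hom sg n X C i1.
Proof.
split.
  move=> j; apply: val_inj; rewrite /= !tnth_mktuple /= tnth_map /s1.
  by rewrite mem_tnth.
move=> i t Ht; rewrite /=.
have -> : map_tuple val (map_tuple i1 t) = map_tuple s1 (map_tuple val t).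
  by apply: eq_from_tnth => j; rewrite !tnth_map.
exact: s1_hom.
Qed.

Lemma foldb_i0 x : foldb (i0 x) = x.
Proof. by apply: val_inj. Qed.
Lemma foldb_i1 x : foldb (i1 x) = x.
Proof. by apply: val_inj; rewrite /= fold_s1. Qed.

Lemma isolated k y : y \in a -> ~~ inball k (a' : seq cylA) (inr y).
Proof.
move=> Hy; elim: k => [|k IH] /=.
  by apply/mapP => -[x _].
rewrite negb_or IH /=; apply/existsP => -[w /andP[_ /existsP[i /existsP[t]]]].
case/and3P=> /existsP[s /andP[_ /orP[] /eqP ->]] _ /mapP[x Hx].
  by [].
rewrite /s1; case: ifP => // Hxa [Exy]; by rewrite -Exy Hy in Hxa.
Qed.

End Cyl.


Theorem proposition10 (sg : vocab) (n d : nat) (X Y : obj sg n)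
    (f g : und d X -> und d Y) :
  isMor f -> isMor g -> left_homotopic f g.
Proof.
case: X f g => [|A a|A x] f g Hf Hg.
- apply: triv_cyl => //; exact: top_unique.
- case: Hf => Haf hf; case: Hg => _ hg.
  pose I0 := @i0 sg n d A a; pose I1 := @i1 sg n d A a.
  pose P := @glue sg n d A a (nbhd d a) id id.
  have hid := is_hom_id (nbhd d a).
  have E0 x : val (I0 x) = inl (val x) by [].
  have E1 x : val (I1 x) = s1 a (val x) by [].
  exists (Nb (a' a)), I0, I1, P, (glue f g).
  split; first by split => //; exact: i0_hom.
  split; first by split => //; exact: i1_hom.
  split; first by split => //; exact: glue_hom.
  split; first by move=> x; rewrite /P (glue_inl _ _ (E0 x)) foldb_i0.
  split; first by move=> x; rewrite /P (glue_s1 hid hid (E1 x)) foldb_i1.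
  split; first by exists I0; split => //; exact: i0_hom.
  split; last first.
    split; first by split; [case: (Y) f g Haf {hf hg} | exact: glue_hom].
    split; first by move=> x; rewrite (glue_inl _ _ (E0 x)) foldb_i0.
    by move=> x; rewrite (glue_s1 hf hg (E1 x)) foldb_i1.
  move=> E B r u0 u1 v Hr _ [Ha0 hu0] [_ hu1] Hv H0 H1.
  exists (glue u0 u1).
  split; first by split; [case: (E) u0 u1 v r Hr H0 H1 Ha0 {hu0 hu1 Hv} | exact: glue_hom].
  split; first by move=> x; rewrite (glue_inl _ _ (E0 x)) foldb_i0.
  split; first by move=> x; rewrite (glue_s1 hu0 hu1 (E1 x)) foldb_i1.
  move=> c; case Ec: (val c) => [y|y].
    rewrite (glue_inl _ _ Ec).
    have -> : c = I0 (foldb c) by apply: val_inj; rewrite E0 foldb_val Ec.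
    by rewrite foldb_i0 H0.
  rewrite /glue Ec.
  case Hy: (y \in (a : seq A)).
    by have := valP c; rewrite Ec => H; move: (isolated d Hy); rewrite H.
  have -> : c = I1 (foldb c).
    by apply: val_inj; rewrite E1 foldb_val Ec /= /s1 Hy.
  by rewrite foldb_i1 H1.
- apply: triv_cyl => //; exact: zr_unique.
Qed.
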